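(* If $t_1$ and $t_2$ are connected CCSK$^{\mathrm P}$ transitions (resp. connected CCSK transitions), then exactly one of $t_1\mathrel{\iota}t_2$ and $t_1\otimes t_2$ holds.
   Context: Names $\mathsf N$ with a bijection $\overline{\cdot}$ onto disjoint co-names; labels $\mathsf L=\mathsf N\cup\overline{\mathsf N}\cup\{\tau\}$ ($\alpha$ over $\mathsf L$, $\lambda$ over $\mathsf L\setminus\{\tau\}$, $\overline\tau=\tau$); $\mathsf K$ a denumerable set of keys. CCSK processes: $X,Y::=\mathbf 0\mid\alpha.X\mid X\backslash\lambda\mid X+Y\mid X|Y\mid\alpha[k].X$; $\mathrm{keys}(X)$ = keys occurring in $X$; standard means $\mathrm{keys}(X)=\emptyset$. Directions $D\in\{\mathrm L,\mathrm R\}$, $\bar{\mathrm L}=\mathrm R$, $\bar{\mathrm R}=\mathrm L$. Proof keyed labels: $\theta::=\upsilon\alpha[k]\mid\upsilon\langle\upsilon_1\lambda[k],\upsilon_2\overline\lambda[k]\rangle$, $\upsilon,\upsilon_i\in\{|_{\mathrm L},|_{\mathrm R},+_{\mathrm L},+_{\mathrm R}\}^*$; $\ell(\upsilon\alpha[k])=\alpha$, $\ell(\upsilon\langle\cdots\rangle)=\tau$, $\mathrm{key}(\theta)=k$. Forward CCSK$^{\mathrm P}$ transitions $X\xrightarrow\theta X'$: least relation closed under (act) $\alpha.X\xrightarrow{\alpha[k]}\alpha[k].X$ if $\mathrm{keys}(X)=\emptyset$; (pre) $X\xrightarrow\theta X'$, $\mathrm{key}(\theta)\neq k$ $\Rightarrow$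 $\alpha[k].X\xrightarrow\theta\alpha[k].X'$; (res) $X\xrightarrow\theta X'$, $\ell(\theta)\notin\{\lambda,\overline\lambda\}$ $\Rightarrow$ $X\backslash\lambda\xrightarrow\theta X'\backslash\lambda$; (par) $X\xrightarrow\theta X'$, $\mathrm{key}(\theta)\notin\mathrm{keys}(Y)$ $\Rightarrow$ $X|Y\xrightarrow{|_{\mathrm L}\theta}X'|Y$ and $Y|X\xrightarrow{|_{\mathrm R}\theta}Y|X'$; (syn) $X\xrightarrow{\upsilon_1\lambda[k]}X'$, $Y\xrightarrow{\upsilon_2\overline\lambda[k]}Y'$ $\Rightarrow$ $X|Y\xrightarrow{\langle\upsilon_1\lambda[k],\upsilon_2\overline\lambda[k]\rangle}X'|Y'$; (sum) $X\xrightarrow\theta X'$, $\mathrm{keys}(Y)=\emptyset$ $\Rightarrow$ $X+Y\xrightarrow{+_{\mathrm L}\theta}X'+Y$ and $Y+X\xrightarrow{+_{\mathrm R}\theta}Y+X'$. Backward transitions are the converse of forward ones (same label). Paths are sequences of composable (forward or backward) transitions; only processes reachable by a path from a standard process are considered. Transitions are connected if there is a path from the source of one to the target of the other. CCSK has the same processes and, for each CCSK$^{\mathrm P}$ transition with label $\theta$, a transition between the same processes with label $\ell(\theta)[\mathrm{key}(\theta)]$; this is a bijection between transitions, and $\hat t$ denotes the CCSK$^{\mathrm P}$ transition corresponding to a CCSK transition $t$. Relations on proof labels (least closed under the rules; ''prefix'' = form $\beta[k']$; $\theta_{\mathrm L},\theta_{\mathrm R}$ components of a synchronisation label): Connectivity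 $\frown$: (A1) $\alpha[k]\frown\theta$; (A2) $\theta\frown\alpha[k]$ if $\theta$ not a prefix; (P1) $|_D\theta\frown|_D\theta'$ if $\theta\frown\theta'$; (P2) $|_D\theta\frown|_{\bar D}\theta'$; (C1) $+_D\theta\frown+_D\theta'$ if $\theta\frown\theta'$; (C2) $+_D\theta\frown+_{\bar D}\theta'$; (S1) $|_D\theta\frown\langle\theta_{\mathrm L},\theta_{\mathrm R}\rangle$ if $\theta\frown\theta_D$; (S2) $\langle\theta_{\mathrm L},\theta_{\mathrm R}\rangle\frown|_D\theta$ if $\theta_D\frown\theta$; (S3) $\langle\theta_1,\theta_2\rangle\frown\langle\theta_1',\theta_2'\rangle$ if $\theta_1\frown\theta_1'$, $\theta_2\frown\theta_2'$. Dependence $\otimes$: A1, A2, C1, C2, P1, S1, S2 with $\otimes$ in place of $\frown$; (P2$_k$) $|_D\theta\otimes|_{\bar D}\theta'$ if $\mathrm{key}(\theta)=\mathrm{key}(\theta')$; (S3) $\langle\theta_1,\theta_2\rangle\otimes\langle\theta_1',\theta_2'\rangle$ if for some $i\ne j$, $\theta_i\otimes\theta_i'$ and $\theta_j\frown\theta_j'$. Independence $\iota$: C1, P1, S1, S2, S3 with $\iota$ in place of $\frown$, plus (P2$_k$) $|_D\theta\mathrel\iota|_{\bar D}\theta'$ if $\mathrm{key}(\theta)\ne\mathrm{key}(\theta')$. On CCSK$^{\mathrm P}$ transitions: $t_1\mathrel\iota t_2$ iff $t_1,t_2$ are connected and their labels satisfy $\iota$; likewise for $\otimes$. On CCSK transitions: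 $t_1\mathrel\iota t_2$ iff $t_1,t_2$ are connected and the labels of $\hat t_1,\hat t_2$ satisfy $\iota$; likewise for $\otimes$. *)

(* Defs.v *)
From Stdlib Require Import List.
Import ListNotations.
Set Implicit Arguments.

Section CCSK.

Variable N : Type.
Definition key := nat.

Inductive vis : Type := VName (a : N) | VCo (a : N).
Definition vbar (l : vis) : vis :=
  match l with VName a => VCo a | VCo a => VName a end.

Inductive label : Type := Vis (l : vis) | Tau.
Definition lbar (a : label) : label :=
  match a with Vis l => Vis (vbar l) | Tau => Tau end.

Inductive proc : Type :=
| PNil : proc
| PPre : label -> proc -> proc
| PRes : proc -> vis -> proc
| PSum : proc -> proc -> proc
| PPar : proc -> proc -> proc
| PKeyed : label -> key -> proc -> proc.

Fixpoint keys (X : proc) : list key :=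
  match X with
  | PNil => []
  | PPre _ X => keys X
  | PRes X _ => keys X
  | PSum X Y => keys X ++ keys Y
  | PPar X Y => keys X ++ keys Y
  | PKeyed _ k X => k :: keys X
  end.

Definition standard (X : proc) : Prop := keys X = [].

Inductive dir : Type := DL | DR.
Definition dbar (D : dir) : dir := match D with DL => DR | DR => DL end.

Inductive op : Type := OPar (D : dir) | OSum (D : dir).

(* Proof keyed labels:
   theta ::= upsilon alpha[k] | upsilon <upsilon1 lambda[k], upsilon2 lambdabar[k]> *)
Inductive plabel : Type :=
| LAct : list op -> label -> key -> plabel
| LSyn : list op -> list op -> vis -> list op -> key -> plabel.

Definition pre (o : op) (t : plabel) : plabel :=
  match t with
  | LAct u a k => LAct (o :: u) a k
  | LSyn u u1 l u2 k => LSyn (o :: u) u1 l u2 k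
  end.

Definition ell (t : plabel) : label :=
  match t with LAct _ a _ => a | LSyn _ _ _ _ _ => Tau end.

Definition keyof (t : plabel) : key :=
  match t with LAct _ _ k => k | LSyn _ _ _ _ k => k end.

Definition comp (D : dir) (u1 : list op) (l : vis) (u2 : list op) (k : key) : plabel :=
  match D with
  | DL => LAct u1 (Vis l) k
  | DR => LAct u2 (Vis (vbar l)) k
  end.

Definition is_prefix (t : plabel) : Prop := exists b k, t = LAct [] b k.

Inductive step : proc -> plabel -> proc -> Prop :=
| st_act : forall a X k, keys X = [] ->
    step (PPre a X) (LAct [] a k) (PKeyed a k X)
| st_pre : forall a k X t X', step X t X' -> keyof t <> k ->
    step (PKeyed a k X) t (PKeyed a k X')
| st_res : forall X t X' l, step X t X' ->
    ell t <> Vis l -> ell t <> Vis (vbar l) ->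
    step (PRes X l) t (PRes X' l)
| st_parL : forall X t X' Y, step X t X' -> ~ In (keyof t) (keys Y) ->
    step (PPar X Y) (pre (OPar DL) t) (PPar X' Y)
| st_parR : forall X t X' Y, step X t X' -> ~ In (keyof t) (keys Y) ->
    step (PPar Y X) (pre (OPar DR) t) (PPar Y X')
| st_syn : forall X X' Y Y' u1 u2 l k,
    step X (LAct u1 (Vis l) k) X' ->
    step Y (LAct u2 (Vis (vbar l)) k) Y' ->
    step (PPar X Y) (LSyn [] u1 l u2 k) (PPar X' Y')
| st_sumL : forall X t X' Y, step X t X' -> keys Y = [] ->
    step (PSum X Y) (pre (OSum DL) t) (PSum X' Y)
| st_sumR : forall X t X' Y, step X t X' -> keys Y = [] ->
    step (PSum Y X) (pre (OSum DR) t) (PSum Y X').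

Inductive path : proc -> proc -> Prop :=
| path_nil : forall X, path X X
| path_fw : forall X t Y Z, step X t Y -> path Y Z -> path X Z
| path_bw : forall X t Y Z, step Y t X -> path Y Z -> path X Z.

Definition reachable (X : proc) : Prop := exists S, standard S /\ path S X.

Record ptrans : Type := PT { psrc : proc; plab : plabel; ptgt : proc }.
Definition is_ptrans (t : ptrans) : Prop := step (psrc t) (plab t) (ptgt t).

Definition pconnected (t1 t2 : ptrans) : Prop :=
  path (psrc t1) (ptgt t2) \/ path (psrc t2) (ptgt t1).

Inductive conn : plabel -> plabel -> Prop :=
| cA1 : forall a k t, conn (LAct [] a k) t
| cA2 : forall t a k, ~ is_prefix t -> conn t (LAct [] a k)
| cP1 : forall D t t', conn t t' -> conn (pre (OPar D) t) (pre (OPar D) t')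
| cP2 : forall D t t', conn (pre (OPar D) t) (pre (OPar (dbar D)) t')
| cC1 : forall D t t', conn t t' -> conn (pre (OSum D) t) (pre (OSum D) t')
| cC2 : forall D t t', conn (pre (OSum D) t) (pre (OSum (dbar D)) t')
| cS1 : forall D t u1 l u2 k, conn t (comp D u1 l u2 k) ->
    conn (pre (OPar D) t) (LSyn [] u1 l u2 k)
| cS2 : forall D t u1 l u2 k, conn (comp D u1 l u2 k) t ->
    conn (LSyn [] u1 l u2 k) (pre (OPar D) t)
| cS3 : forall u1 l u2 k u1' l' u2' k',
    conn (comp DL u1 l u2 k) (comp DL u1' l' u2' k') ->
    conn (comp DR u1 l u2 k) (comp DR u1' l' u2' k') ->
    conn (LSyn [] u1 l u2 k) (LSyn [] u1' l' u2' k').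

Inductive dep : plabel -> plabel -> Prop :=
| dA1 : forall a k t, dep (LAct [] a k) t
| dA2 : forall t a k, ~ is_prefix t -> dep t (LAct [] a k)
| dP1 : forall D t t', dep t t' -> dep (pre (OPar D) t) (pre (OPar D) t')
| dP2k : forall D t t', keyof t = keyof t' ->
    dep (pre (OPar D) t) (pre (OPar (dbar D)) t')
| dC1 : forall D t t', dep t t' -> dep (pre (OSum D) t) (pre (OSum D) t')
| dC2 : forall D t t', dep (pre (OSum D) t) (pre (OSum (dbar D)) t')
| dS1 : forall D t u1 l u2 k, dep t (comp D u1 l u2 k) ->
    dep (pre (OPar D) t) (LSyn [] u1 l u2 k)
| dS2 : forall D t u1 l u2 k, dep (comp D u1 l u2 k) t ->
    dep (LSyn [] u1 l u2 k) (pre (OPar D) t)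
| dS3 : forall i j u1 l u2 k u1' l' u2' k', i <> j ->
    dep (comp i u1 l u2 k) (comp i u1' l' u2' k') ->
    conn (comp j u1 l u2 k) (comp j u1' l' u2' k') ->
    dep (LSyn [] u1 l u2 k) (LSyn [] u1' l' u2' k').

Inductive ind : plabel -> plabel -> Prop :=
| iP1 : forall D t t', ind t t' -> ind (pre (OPar D) t) (pre (OPar D) t')
| iP2k : forall D t t', keyof t <> keyof t' ->
    ind (pre (OPar D) t) (pre (OPar (dbar D)) t')
| iC1 : forall D t t', ind t t' -> ind (pre (OSum D) t) (pre (OSum D) t')
| iS1 : forall D t u1 l u2 k, ind t (comp D u1 l u2 k) ->
    ind (pre (OPar D) t) (LSyn [] u1 l u2 k)
| iS2 : forall D t u1 l u2 k, ind (comp D u1 l u2 k) t ->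
    ind (LSyn [] u1 l u2 k) (pre (OPar D) t)
| iS3 : forall u1 l u2 k u1' l' u2' k',
    ind (comp DL u1 l u2 k) (comp DL u1' l' u2' k') ->
    ind (comp DR u1 l u2 k) (comp DR u1' l' u2' k') ->
    ind (LSyn [] u1 l u2 k) (LSyn [] u1' l' u2' k').

Definition ptrans_ind (t1 t2 : ptrans) : Prop :=
  pconnected t1 t2 /\ ind (plab t1) (plab t2).
Definition ptrans_dep (t1 t2 : ptrans) : Prop :=
  pconnected t1 t2 /\ dep (plab t1) (plab t2).

(* CCSK: same processes; a transition labelled l(theta)[key(theta)]
   for each CCSK^P transition labelled theta. *)
Definition cstep (X : proc) (a : label) (k : key) (X' : proc) : Prop :=
  exists t, step X t X' /\ ell t = a /\ keyof t = k.

Inductive cpath : proc -> proc -> Prop :=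
| cpath_nil : forall X, cpath X X
| cpath_fw : forall X a k Y Z, cstep X a k Y -> cpath Y Z -> cpath X Z
| cpath_bw : forall X a k Y Z, cstep Y a k X -> cpath Y Z -> cpath X Z.

Definition creachable (X : proc) : Prop := exists S, standard S /\ cpath S X.

Record ctrans : Type := CT { csrc : proc; clab : label; ckey : key; ctgt : proc }.
Definition is_ctrans (t : ctrans) : Prop := cstep (csrc t) (clab t) (ckey t) (ctgt t).

Definition cconnected (t1 t2 : ctrans) : Prop :=
  cpath (csrc t1) (ctgt t2) \/ cpath (csrc t2) (ctgt t1).

(* hat t = the CCSK^P transition corresponding to the CCSK transition t
   (unique, since the correspondence is a bijection). *)
Definition is_hat (t : ctrans) (th : ptrans) : Prop :=
  is_ptrans th /\ psrc th = csrc t /\ ptgt th = ctgt t /\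
  ell (plab th) = clab t /\ keyof (plab th) = ckey t.

Definition ctrans_ind (t1 t2 : ctrans) : Prop :=
  cconnected t1 t2 /\
  exists h1 h2, is_hat t1 h1 /\ is_hat t2 h2 /\ ind (plab h1) (plab h2).
Definition ctrans_dep (t1 t2 : ctrans) : Prop :=
  cconnected t1 t2 /\
  exists h1 h2, is_hat t1 h1 /\ is_hat t2 h2 /\ dep (plab h1) (plab h2).

End CCSK.

(* Main.v *)
Require Import Defs.
From Stdlib Require Import List Arith Lia.
Import ListNotations.

Section H.
Variable N : Type.

Fixpoint erase (X : proc N) : proc N :=
  match X with
  | PNil _ => PNil N
  | PPre a X => PPre a (erase X)
  | PRes X l => PRes (erase X) l
  | PSum X Y => PSum (erase X) (erase Y)
  | PPar X Y => PPar (erase X) (erase Y)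
  | PKeyed a k X => PPre a (erase X)
  end.

Lemma step_erase X t Y : step X t Y -> erase X = erase Y.
Proof. induction 1; simpl; congruence. Qed.

Lemma path_erase X Y : path X Y -> erase X = erase Y.
Proof. induction 1; try apply step_erase in H; congruence. Qed.

Lemma cpath_erase X Y : cpath X Y -> erase X = erase Y.
Proof.
  induction 1; auto;
  destruct H as [t [Hs _]]; apply step_erase in Hs; congruence.
Qed.

Lemma pre_inj o o' (t t' : plabel N) : pre o t = pre o' t' -> o = o' /\ t = t'.
Proof. destruct t, t'; simpl; intro H; inversion H; subst; auto. Qed.

Lemma pre_act o (t : plabel N) a k : pre o t <> LAct [] a k.
Proof. destruct t; simpl; discriminate. Qed.

Lemma pre_syn o (t : plabel N) u1 l u2 k : pre o t <> LSyn [] u1 l u2 k.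
Proof. destruct t; simpl; discriminate. Qed.

Lemma ind_conn (t t' : plabel N) : ind t t' -> conn t t'.
Proof. induction 1; constructor; auto. Qed.

Lemma dep_conn (t t' : plabel N) : dep t t' -> conn t t'.
Proof.
  induction 1; try (constructor; auto; fail).
  destruct i, j; try congruence; constructor; auto.
Qed.

Ltac clean :=
  repeat match goal with
  | H : pre _ _ = pre _ _ |- _ => apply pre_inj in H; destruct H as [? ?]
  | H : pre _ _ = LAct [] _ _ |- _ => exfalso; exact (pre_act _ _ _ _ H)
  | H : LAct [] _ _ = pre _ _ |- _ => exfalso; symmetry in H; exact (pre_act _ _ _ _ H)
  | H : pre _ _ = LSyn [] _ _ _ _ |- _ => exfalso; exact (pre_syn _ _ _ _ _ _ H)
  | H : LSyn [] _ _ _ _ = pre _ _ |- _ => exfalso; symmetry in H; exact (pre_syn _ _ _ _ _ _ H)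
  | H : OPar _ = OPar _ |- _ => injection H; clear H; intro
  | H : OSum _ = OSum _ |- _ => injection H; clear H; intro
  | H : OPar _ = OSum _ |- _ => discriminate H
  | H : OSum _ = OPar _ |- _ => discriminate H
  end; subst.

Lemma ind_not_act_l (t t' : plabel N) : ind t t' -> forall a k, t <> LAct [] a k.
Proof. induction 1; intros; try apply pre_act; discriminate. Qed.
Lemma ind_not_act_r (t t' : plabel N) : ind t t' -> forall a k, t' <> LAct [] a k.
Proof. induction 1; intros; try apply pre_act; discriminate. Qed.

Lemma excl (t t' : plabel N) : ind t t' -> ~ dep t t'.
Proof.
  induction 1; intro Hd; inversion Hd; subst; clean;
  try (match goal with H : ?D = dbar ?D |- _ => destruct D; discriminate end);
  try (match goal with H : dbar ?D = ?D |- _ => destruct D; discriminate end);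
  eauto.
  all: match goal with H : _ <> _ |- _ => idtac end; destruct i, j; try congruence; eauto.
Qed.

Lemma dep_act_r (t : plabel N) a k : dep t (LAct [] a k).
Proof.
  destruct t as [u b k'|u u1 l u2 k'].
  - destruct u. apply dA1. apply dA2. intros [b0 [k0 H]]; discriminate.
  - apply dA2. intros [b0 [k0 H]]; discriminate.
Qed.

Lemma combine_syn u1 l u2 k u1' l' u2' k' :
  (ind (comp DL u1 l u2 k) (comp DL u1' l' u2' k') \/ dep (comp DL u1 l u2 k) (comp DL u1' l' u2' k')) ->
  (ind (comp DR u1 l u2 k) (comp DR u1' l' u2' k') \/ dep (comp DR u1 l u2 k) (comp DR u1' l' u2' k')) ->
  ind (LSyn [] u1 l u2 k) (LSyn [] u1' l' u2' k') \/ dep (@LSyn N [] u1 l u2 k) (LSyn [] u1' l' u2' k').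
Proof.
  intros [A|A] [B|B].
  - left; constructor; auto.
  - right; apply (dS3 (i:=DR) (j:=DL)); [discriminate|auto|apply ind_conn; auto].
  - right; apply (dS3 (i:=DL) (j:=DR)); [discriminate|auto|apply ind_conn; auto].
  - right; apply (dS3 (i:=DL) (j:=DR)); [discriminate|auto|apply dep_conn; auto].
Qed.

Lemma total X t X' : step X t X' -> forall Y t' Y', step Y t' Y' -> erase X = erase Y ->
  ind t t' \/ dep t t'.
Proof.
  induction 1; intros Y0 t0 Y0' HY He; [right; apply dA1|..];
  destruct HY; simpl in He; try discriminate; injection He; intros; subst;
  try (right; apply dep_act_r; fail).
  - eauto.
  - eauto.
  - destruct (IHstep _ _ _ HY ltac:(assumption)); [left; apply iP1|right; apply dP1]; auto.
  - destruct (Nat.eq_dec (keyof t) (keyof t0));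
    [right; apply (dP2k DL)|left; apply (iP2k DL)]; auto.
  - destruct (IHstep _ _ _ HY1 ltac:(assumption)); [left; apply (iS1 DL)|right; apply (dS1 DL)]; auto.
  - destruct (Nat.eq_dec (keyof t) (keyof t0));
    [right; apply (dP2k DR)|left; apply (iP2k DR)]; auto.
  - destruct (IHstep _ _ _ HY ltac:(assumption)); [left; apply iP1|right; apply dP1]; auto.
  - destruct (IHstep _ _ _ HY2 ltac:(assumption)); [left; apply (iS1 DR)|right; apply (dS1 DR)]; auto.
  - destruct (IHstep1 _ _ _ HY ltac:(assumption)); [left; apply (iS2 DL)|right; apply (dS2 DL)]; auto.
  - destruct (IHstep2 _ _ _ HY ltac:(assumption)); [left; apply (iS2 DR)|right; apply (dS2 DR)]; auto.
  - apply combine_syn; eauto.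
  - destruct (IHstep _ _ _ HY ltac:(assumption)); [left; apply iC1|right; apply dC1]; auto.
  - right; apply (dC2 DL).
  - right; apply (dC2 DR).
  - destruct (IHstep _ _ _ HY ltac:(assumption)); [left; apply iC1|right; apply dC1]; auto.
Qed.

Lemma step_grow X t Y : step X t Y -> length (keys (N:=N) X) < length (keys Y).
Proof. induction 1; simpl; rewrite ?length_app; simpl in *; try rewrite H; simpl; lia. Qed.

Lemma step_neq (X : proc N) t : ~ step X t X.
Proof. intro H; apply step_grow in H; lia. Qed.

Lemma step_uniq (X : proc N) t X' : step X t X' -> forall t', step X t' X' -> t = t'.
Proof.
  induction 1; intros t'' H'; inversion H'; subst;
  try (exfalso; eapply step_neq; eassumption); try reflexivity; try (f_equal; eauto; fail).
  match goal with H1 : step X _ X', H2 : step Y _ Y' |- _ =>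
    apply IHstep1 in H1; apply IHstep2 in H2; injection H1; injection H2 end.
  intros; subst.
  reflexivity.
Qed.
End H.
Arguments erase {N}. Arguments step_erase {N X t Y}. Arguments path_erase {N X Y}. Arguments cpath_erase {N X Y}.
Arguments total {N X t X'} _ {Y t' Y'}. Arguments excl {N t t'}. Arguments step_uniq {N X t X'}.

Lemma hat_uniq {N} (t : ctrans N) h h' : is_hat t h -> is_hat t h' -> plab h = plab h'.
Proof.
  intros [S [E1 [E2 _]]] [S' [E1' [E2' _]]].
  unfold is_ptrans in *. rewrite E1, E2 in S. rewrite E1', E2' in S'.
  eapply step_uniq; eauto.
Qed.

Arguments hat_uniq {N t h h'}.

Theorem proposition4p8 (N : Type) :
  (forall t1 t2 : ptrans N,
     is_ptrans t1 -> is_ptrans t2 ->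
     reachable (psrc t1) -> reachable (psrc t2) ->
     pconnected t1 t2 ->
     (ptrans_ind t1 t2 /\ ~ ptrans_dep t1 t2) \/
     (ptrans_dep t1 t2 /\ ~ ptrans_ind t1 t2)) /\
  (forall t1 t2 : ctrans N,
     is_ctrans t1 -> is_ctrans t2 ->
     creachable (csrc t1) -> creachable (csrc t2) ->
     cconnected t1 t2 ->
     (ctrans_ind t1 t2 /\ ~ ctrans_dep t1 t2) \/
     (ctrans_dep t1 t2 /\ ~ ctrans_ind t1 t2)).
Proof.
  split.
  - intros t1 t2 H1 H2 _ _ Hc.
    assert (He : erase (psrc t1) = erase (psrc t2)).
    { unfold is_ptrans in *. apply step_erase in H1. apply step_erase in H2.
      destruct Hc as [P|P]; apply path_erase in P; congruence. }
    unfold ptrans_ind, ptrans_dep.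
    destruct (total H1 H2 He) as [I|D].
    + left; split; auto. intros [_ D]. exact (excl I D).
    + right; split; auto. intros [_ I]. exact (excl I D).
  - intros t1 t2 [th1 [S1 [E1 K1]]] [th2 [S2 [E2 K2]]] _ _ Hc.
    set (h1 := PT (csrc t1) th1 (ctgt t1)).
    set (h2 := PT (csrc t2) th2 (ctgt t2)).
    assert (Hh1 : is_hat t1 h1) by (repeat split; auto).
    assert (Hh2 : is_hat t2 h2) by (repeat split; auto).
    assert (He : erase (csrc t1) = erase (csrc t2)).
    { pose proof (step_erase S1). pose proof (step_erase S2).
      destruct Hc as [P|P]; apply cpath_erase in P; congruence. }
    unfold ctrans_ind, ctrans_dep.
    destruct (total S1 S2 He) as [I|D].
    + left; split; [split; auto; exists h1, h2; auto|].
      intros [_ [g1 [g2 [G1 [G2 D]]]]].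
      rewrite <- (hat_uniq Hh1 G1), <- (hat_uniq Hh2 G2) in D.
      exact (excl I D).
    + right; split; [split; auto; exists h1, h2; auto|].
      intros [_ [g1 [g2 [G1 [G2 I]]]]].
      rewrite <- (hat_uniq Hh1 G1), <- (hat_uniq Hh2 G2) in I.
      exact (excl I D).
Qed.
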